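(* The dimension of the vector space $\mathcal{D}\cap (I_{\mathcal{C}})_2$ is $d-3$.
   Context: Let $P_d$ be a convex polygon with $d\ge 4$ vertices $v_1,\dots,v_d$ (indices mod $d$) over a field $\mathbb{K}$ with no three edge lines concurrent, and ${\bf v}_i=(v_i,1)\in\mathbb{K}^3$. In $S=\mathbb{K}[x_1,\ldots,x_d]$ let $\tau=\sum_i x_i{\bf v}_i=(\tau_1,\tau_2,\tau_3)$, $\mathcal{C}=\mathbb{V}(\tau_1,\tau_2,\tau_3)$ with ideal $I_{\mathcal{C}}=\langle\tau_1,\tau_2,\tau_3\rangle$, and $\mathcal{D}\subseteq S_2$ the span of diagonal monomials $x_ix_j$, $j\notin\{i-1,i,i+1\}$. *)

(* Defs.v *)
From HB Require Import structures.
From mathcomp Require Import all_boot all_order all_algebra.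
From mathcomp Require Import mpoly.
Set Implicit Arguments. Unset Strict Implicit. Unset Printing Implicit Defensive.
Import Order.TTheory GRing.Theory Num.Theory.
Local Open Scope ring_scope.

(* Points of the plane K^2 are pairs; indices of vertices are 'I_d, taken
   cyclically: the successor of i is [ordS i] (= i+1 mod d). *)

Definition orient (K : ringType) (a b c : K * K) : K :=
  (b.1 - a.1) * (c.2 - a.2) - (b.2 - a.2) * (c.1 - a.1).

(* v_0, ..., v_{d-1} (in this cyclic order) are the vertices of a convex
   polygon: for every edge [v_i, v_{i+1}], all other vertices lie strictly on
   one and the same side of its line, the side being the same for all edges
   (counterclockwise or clockwise orientation). *)
Definition convex_polygon (K : realFieldType) (d : nat) (v : 'I_d -> K * K) :=
  (forall i j : 'I_d, j != i -> j != ordS i -> 0 < orient (v i) (v (ordS i)) (v j))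
  \/
  (forall i j : 'I_d, j != i -> j != ordS i -> orient (v i) (v (ordS i)) (v j) < 0).

Definition on_edge_line (K : ringType) (d : nat) (v : 'I_d -> K * K)
  (i : 'I_d) (p : K * K) : Prop :=
  orient (v i) (v (ordS i)) p = 0.

Definition no_three_edge_lines_concurrent (K : ringType) (d : nat)
  (v : 'I_d -> K * K) : Prop :=
  forall i j k : 'I_d, i != j -> j != k -> i != k ->
    ~ (exists p : K * K,
        [/\ on_edge_line v i p, on_edge_line v j p & on_edge_line v k p]).

(* tau = sum_i x_i (v_i, 1) : the three linear forms tau_1, tau_2, tau_3 *)
Definition tau (K : ringType) (d : nat) (v : 'I_d -> K * K) (k : 'I_3)
  : {mpoly K[d]} :=
  \sum_(i < d) (match val k with
                | 0 => (v i).1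
                | 1 => (v i).2
                | _ => 1
                end) *: 'X_i.

(* membership in (I_C)_2, the degree-2 part of I_C = <tau_1, tau_2, tau_3> *)
Definition in_IC2 (K : ringType) (d : nat) (v : 'I_d -> K * K)
  (p : {mpoly K[d]}) : Prop :=
  p \is 2.-homog /\
  exists q : 'I_3 -> {mpoly K[d]}, p = \sum_(k < 3) q k * tau v k.

Definition diagonal_pair (d : nat) (i j : 'I_d) : bool :=
  [&& j != i, j != ordS i & i != ordS j].

Definition in_D (K : ringType) (d : nat) (p : {mpoly K[d]}) : Prop :=
  exists c : 'I_d -> 'I_d -> K,
    p = \sum_(i < d) \sum_(j < d | diagonal_pair i j) c i j *: ('X_i * 'X_j).

Definition has_dim (K : ringType) (d : nat) (W : {mpoly K[d]} -> Prop)
  (n : nat) : Prop :=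
  exists b : 'I_n -> {mpoly K[d]},
    [/\ forall t, W (b t),
        (forall c : 'I_n -> K, \sum_(t < n) c t *: b t = 0 -> forall t, c t = 0)
      & forall p, W p -> exists c : 'I_n -> K, p = \sum_(t < n) c t *: b t].

(* Main.v *)
Require Import Defs.
From HB Require Import structures.
From mathcomp Require Import all_boot all_order all_algebra.
From mathcomp Require Import mpoly.
From mathcomp Require Import ring zify.
Import Order.TTheory GRing.Theory Num.Theory.
Local Open Scope ring_scope.
Set Implicit Arguments. Unset Strict Implicit. Unset Printing Implicit Defensive.
Definition i0 : 'I_3 := @Ordinal 3 0 isT.
Definition i1 : 'I_3 := @Ordinal 3 1 isT.
Definition i2 : 'I_3 := @Ordinal 3 2 isT.

Lemma sum3 (R : nmodType) (F : 'I_3 -> R) : \sum_(k < 3) F k = F i0 + F i1 + F i2.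
Proof.
rewrite !big_ord_recr big_ord0 /= ?add0r.
congr (F _ + F _ + F _); exact: val_inj.
Qed.

Definition dot (R : ringType) (a b : 'I_3 -> R) : R := \sum_(k < 3) a k * b k.

Lemma dotE (R : ringType) (a b : 'I_3 -> R) :
  dot a b = a i0 * b i0 + a i1 * b i1 + a i2 * b i2.
Proof. by rewrite /dot sum3. Qed.

Definition det3 (R : ringType) (a b c : 'I_3 -> R) : R :=
  a i0 * (b i1 * c i2 - b i2 * c i1) - a i1 * (b i0 * c i2 - b i2 * c i0)
  + a i2 * (b i0 * c i1 - b i1 * c i0).

Definition cross (R : ringType) (a b : 'I_3 -> R) : 'I_3 -> R :=
  fun k => match val k with
           | 0 => a i1 * b i2 - a i2 * b i1
           | 1 => a i2 * b i0 - a i0 * b i2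
           | _ => a i0 * b i1 - a i1 * b i0 end.

Lemma dot_cross (R : comRingType) (a b c : 'I_3 -> R) :
  dot c (cross a b) = det3 a b c.
Proof. rewrite dotE /cross /det3 /=; ring. Qed.

Lemma dot_uniq (R : fieldType) (A B C w w' : 'I_3 -> R) :
  det3 A B C != 0 -> dot A w = dot A w' -> dot B w = dot B w' ->
  dot C w = dot C w' -> forall k, w k = w' k.
Proof.
move=> nz; rewrite !dotE => hA hB hC.
have key : forall z : 'I_3 -> R,
  det3 A B C * z i0 = (A i0 * z i0 + A i1 * z i1 + A i2 * z i2) * (B i1 * C i2 - B i2 * C i1)
    + (B i0 * z i0 + B i1 * z i1 + B i2 * z i2) * (C i1 * A i2 - C i2 * A i1)
    + (C i0 * z i0 + C i1 * z i1 + C i2 * z i2) * (A i1 * B i2 - A i2 * B i1) /\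
  det3 A B C * z i1 = (A i0 * z i0 + A i1 * z i1 + A i2 * z i2) * (B i2 * C i0 - B i0 * C i2)
    + (B i0 * z i0 + B i1 * z i1 + B i2 * z i2) * (C i2 * A i0 - C i0 * A i2)
    + (C i0 * z i0 + C i1 * z i1 + C i2 * z i2) * (A i2 * B i0 - A i0 * B i2) /\
  det3 A B C * z i2 = (A i0 * z i0 + A i1 * z i1 + A i2 * z i2) * (B i0 * C i1 - B i1 * C i0)
    + (B i0 * z i0 + B i1 * z i1 + B i2 * z i2) * (C i0 * A i1 - C i1 * A i0)
    + (C i0 * z i0 + C i1 * z i1 + C i2 * z i2) * (A i0 * B i1 - A i1 * B i0).
  by move=> z; rewrite /det3; split; [ring | split; ring].
have [k0 [k1 k2]] := key w; have [k0' [k1' k2']] := key w'.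
rewrite hA hB hC -k0' -k1' -k2' in k0 k1 k2.
move=> k; case: k => [[|[|[|//]]] hk].
- have -> : Ordinal hk = i0 by exact: val_inj.
  by apply: (mulfI nz).
- have -> : Ordinal hk = i1 by exact: val_inj.
  by apply: (mulfI nz).
- have -> : Ordinal hk = i2 by exact: val_inj.
  by apply: (mulfI nz).
Qed.

Lemma dot_ext (R : ringType) (a b b' : 'I_3 -> R) :
  (forall k, b k = b' k) -> dot a b = dot a b'.
Proof. by move=> h; apply: eq_bigr => k _; rewrite h. Qed.

Lemma dotC (R : comRingType) (a b : 'I_3 -> R) : dot a b = dot b a.
Proof. by apply: eq_bigr => k _; rewrite mulrC. Qed.

Lemma dot_scale (R : comRingType) (c : R) (a b : 'I_3 -> R) :
  dot a (fun k => c * b k) = c * dot a b.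
Proof. rewrite !dotE; ring. Qed.

Definition Gp (R : ringType) (v0 v1 v2 u0 u1 u2 x : 'I_3 -> R) : 'I_3 -> R :=
  fun k => det3 x v1 v2 * u0 k + det3 v0 x v2 * u1 k + det3 v0 v1 x * u2 k.

Lemma Gp_antisym (R : numFieldType) (v0 v1 v2 u0 u1 u2 : 'I_3 -> R) :
  det3 v0 v1 v2 != 0 ->
  dot v0 u0 = 0 -> dot v1 u1 = 0 -> dot v2 u2 = 0 ->
  dot v0 u1 + dot v1 u0 = 0 -> dot v0 u2 + dot v2 u0 = 0 ->
  dot v1 u2 + dot v2 u1 = 0 ->
  forall x y, dot x (Gp v0 v1 v2 u0 u1 u2 y) + dot y (Gp v0 v1 v2 u0 u1 u2 x) = 0.
Proof.
move=> nz S0 S1 S2 N01 N02 N12 x y.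
have E : det3 v0 v1 v2 *
   (dot x (Gp v0 v1 v2 u0 u1 u2 y) + dot y (Gp v0 v1 v2 u0 u1 u2 x)) =
   2%:R * det3 x v1 v2 * det3 y v1 v2 * dot v0 u0
 + 2%:R * det3 v0 x v2 * det3 v0 y v2 * dot v1 u1
 + 2%:R * det3 v0 v1 x * det3 v0 v1 y * dot v2 u2
 + (det3 y v1 v2 * det3 v0 x v2 + det3 x v1 v2 * det3 v0 y v2) * (dot v0 u1 + dot v1 u0)
 + (det3 y v1 v2 * det3 v0 v1 x + det3 x v1 v2 * det3 v0 v1 y) * (dot v0 u2 + dot v2 u0)
 + (det3 v0 y v2 * det3 v0 v1 x + det3 v0 x v2 * det3 v0 v1 y) * (dot v1 u2 + dot v2 u1).
  rewrite /Gp !dotE /det3; ring.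
rewrite S0 S1 S2 N01 N02 N12 !mulr0 !addr0 in E.
by move/eqP: E; rewrite mulf_eq0 (negbTE nz) /= => /eqP.
Qed.

Lemma Gp_self (R : numFieldType) (v0 v1 v2 u0 u1 u2 : 'I_3 -> R) :
  (forall x y, dot x (Gp v0 v1 v2 u0 u1 u2 y) + dot y (Gp v0 v1 v2 u0 u1 u2 x) = 0) ->
  forall x, dot x (Gp v0 v1 v2 u0 u1 u2 x) = 0.
Proof.
move=> h x; have := h x x; set t := dot _ _ => /eqP.
rewrite -mulr2n -mulr_natr mulf_eq0 pnatr_eq0 orbF => /eqP //.
Qed.

Definition Qp (R : ringType) (n : nat) (V u : 'I_n -> 'I_3 -> R) (a b : 'I_n) :=
  dot (V a) (u b) + dot (V b) (u a) = 0.

Lemma crux (R : numFieldType) (n : nat) (V u : 'I_n.+1 -> 'I_3 -> R) :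
  (3 <= n)%N ->
  (forall m, (m + 2 <= n)%N ->
     det3 (V (inord m)) (V (inord m.+1)) (V (inord m.+2)) != 0) ->
  det3 (V (inord n.-1)) (V (inord n)) (V (inord 0)) != 0 ->
  (forall a, dot (V a) (u a) = 0) ->
  (forall m, (m < n)%N -> Qp V u (inord m) (inord m.+1)) ->
  Qp V u (inord n) (inord 0) ->
  (forall m, (m + 3 <= n)%N -> Qp V u (inord m) (inord m.+2)) ->
  forall a b, Qp V u a b.
Proof.
move=> n3 Hdet Hw Hs Hadj Hwrap Hsd.
set v0 := V (inord 0); set v1 := V (inord 1); set v2 := V (inord 2).
set u0 := u (inord 0); set u1 := u (inord 1); set u2 := u (inord 2).
have nz : det3 v0 v1 v2 != 0 by apply: Hdet; rewrite add0n; apply: leq_trans n3.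
set D := det3 v0 v1 v2.
have AS : forall x y, dot x (Gp v0 v1 v2 u0 u1 u2 y) + dot y (Gp v0 v1 v2 u0 u1 u2 x) = 0.
  apply: Gp_antisym => //; try exact: Hs.
  - by apply: (Hadj 0%N); apply: leq_trans n3.
  - by apply: (Hsd 0%N).
  - by apply: (Hadj 1%N); apply: leq_trans n3.
have AS1 := Gp_self AS.
set G := Gp v0 v1 v2 u0 u1 u2 in AS AS1.
have IND : forall m, (m <= n)%N -> forall k, D * u (inord m) k = G (V (inord m)) k.
  elim/ltn_ind => m IH hm k.
  case: m IH hm => [|[|[|m']]] IH hm.
  - rewrite /G /Gp -/v0 -/u0 /D /det3; ring.
  - rewrite /G /Gp -/v1 -/u1 /D /det3; ring.
  - rewrite /G /Gp -/v2 -/u2 /D /det3; ring.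
  have key : forall A B C : 'I_3 -> R, det3 A B C != 0 ->
      dot A (fun k => D * u (inord m'.+3) k) = dot A (G (V (inord m'.+3))) ->
      dot B (fun k => D * u (inord m'.+3) k) = dot B (G (V (inord m'.+3))) ->
      dot C (fun k => D * u (inord m'.+3) k) = dot C (G (V (inord m'.+3))) ->
      D * u (inord m'.+3) k = G (V (inord m'.+3)) k.
    move=> A B C dA hA hB hC.
    exact: (dot_uniq dA hA hB hC k (w := fun k => D * u (inord m'.+3) k)).
  have step : forall c, (c < m'.+3)%N -> Qp V u (inord c) (inord m'.+3) ->
      dot (V (inord c)) (fun k => D * u (inord m'.+3) k) =
      dot (V (inord c)) (G (V (inord m'.+3))).
    move=> c hc hQ; rewrite dot_scale.
    have -> : dot (V (inord c)) (u (inord m'.+3)) =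
              - dot (V (inord m'.+3)) (u (inord c)).
      by apply/eqP; rewrite -addr_eq0; apply/eqP; exact: hQ.
    rewrite mulrN -dot_scale (dot_ext _ (IH c hc (leq_trans (ltnW hc) hm))).
    by apply/eqP; rewrite eq_sym -addr_eq0; apply/eqP; rewrite addrC; exact: AS.
  have selfm : dot (V (inord m'.+3)) (fun k => D * u (inord m'.+3) k) =
               dot (V (inord m'.+3)) (G (V (inord m'.+3))).
    by rewrite dot_scale Hs AS1 mulr0.
  case: (ltnP m'.+3 n) => hlt.
  - have hd : (m'.+1 + 2 <= n)%N by rewrite addn2 ltnW.
    apply: (key _ _ _ (Hdet m'.+1 hd)) => //.
    + apply: step; first exact: ltnW (ltnSn _).
      by apply: Hsd; rewrite addn3.
    + apply: step; first exact: ltnSn.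
      by apply: Hadj; rewrite ltnW.
  - have en : m'.+3 = n by apply/eqP; rewrite eqn_leq hm hlt.
    subst n.
    have H0 : dot (V (inord 0)) (fun k => D * u (inord m'.+3) k) =
              dot (V (inord 0)) (G (V (inord m'.+3))).
      apply: step => //.
      rewrite /Qp addrC; exact: Hwrap.
    apply: (key _ _ _ Hw) => //.
    apply: step; first exact: ltnSn.
    exact: Hadj.
have IND' : forall a k, D * u a k = G (V a) k.
  move=> a k; have := IND (val a) (ltn_ord a) k.
  by rewrite inord_val.
move=> a b; rewrite /Qp.
apply/eqP; rewrite -(mulrI_eq0 _ (lregP nz)) mulrDr -!dot_scale.
rewrite (dot_ext _ (IND' b)) (dot_ext _ (IND' a)).
by rewrite AS.
Qed.

Lemma sum_if2 (R : nmodType) (n : nat) (A B : 'I_n -> R) (a b : 'I_n) :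
  \sum_(l < n) (if l == a then A l else if l == b then B l else 0) =
  A a + (if b == a then 0 else B b).
Proof.
rewrite (bigD1 a) //= eqxx; congr (_ + _).
have -> : \sum_(i < n | i != a) (if i == a then A i else if i == b then B i else 0)
        = \sum_(i < n | i != a) (if i == b then B i else 0).
  by apply: eq_bigr => i /negbTE ->.
case: eqP => [->|/eqP nba].
  by rewrite big1 // => i /negbTE ->.
rewrite (bigD1 b) //= eqxx big1 ?addr0 // => i /andP[_ /negbTE ->] //.
Qed.

Lemma sum_delta (R : nmodType) (n : nat) (G : 'I_n -> R) (b : 'I_n) :
  \sum_(i < n) (if i == b then G i else 0) = G b.
Proof.
rewrite (bigD1 b) //= eqxx big1 ?addr0 // => i /negbTE -> //.
Qed.

Lemma cMX (R : comRingType) (n : nat) (q : {mpoly R[n]}) (l a b : 'I_n) :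
  (q * 'X_l)@_(U_(a) + U_(b))%MM =
  if l == a then q@_U_(b) else if l == b then q@_U_(a) else 0.
Proof.
case: eqP => [->|/eqP nla]; first by rewrite mcoeffMX.
case: eqP => [->|/eqP nlb]; first by rewrite addmC mcoeffMX.
apply: memN_msupp_eq0; rewrite (perm_mem (msuppMX q U_(l))).
apply/mapP => -[m' _ /(congr1 (fun m : 'X_{1..n} => m l))].
rewrite !mnmDE !mnm1E eqxx (eq_sym a) (eq_sym b) (negbTE nla) (negbTE nlb) /=.
by [].
Qed.

Lemma coef_lin (R : comRingType) (n : nat) (c : 'I_n -> R) (a : 'I_n) :
  (\sum_(j < n) c j *: ('X_j : {mpoly R[n]}))@_U_(a) = c a.
Proof.
rewrite raddf_sum /= -[RHS](sum_delta (fun j => c j)).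
apply: eq_bigr => j _; rewrite mcoeffZ mcoeffXU.
by case: eqP => _; rewrite ?mulr1 ?mulr0.
Qed.

Lemma coef2 (R : comRingType) (n : nat) (q : 'I_3 -> {mpoly R[n]})
  (V : 'I_n -> 'I_3 -> R) (a b : 'I_n) :
  (\sum_(k < 3) q k * (\sum_(i < n) V i k *: 'X_i))@_(U_(a) + U_(b))%MM =
  dot (V a) (fun k => (q k)@_U_(b)) +
  (if b == a then 0 else dot (V b) (fun k => (q k)@_U_(a))).
Proof.
rewrite raddf_sum /=.
have H : forall k, (q k * (\sum_(i < n) V i k *: 'X_i))@_(U_(a) + U_(b))%MM =
   V a k * (q k)@_U_(b) + (if b == a then 0 else V b k * (q k)@_U_(a)).
  move=> k; rewrite mulr_sumr raddf_sum /=.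
  rewrite -(sum_if2 (fun i => V i k * (q k)@_U_(b)) (fun i => V i k * (q k)@_U_(a))).
  apply: eq_bigr => i _; rewrite -scalerAr mcoeffZ cMX.
  by case: eqP => _; [|case: eqP => _]; rewrite ?mulr0.
rewrite (eq_bigr _ (fun k _ => H k)) big_split /=; congr (_ + _).
case: eqP => _; first by rewrite big1.
by [].
Qed.

Lemma sum_delta' (R : semiRingType) (n : nat) (G : 'I_n -> R) (b : 'I_n) :
  \sum_(i < n) G i * (i == b)%:R = G b.
Proof.
rewrite -[RHS](sum_delta G b); apply: eq_bigr => i _.
by case: eqP => _; rewrite ?mulr1 ?mulr0.
Qed.

Lemma coefXX (R : comRingType) (n : nat) (F : 'I_n -> 'I_n -> R) (a b : 'I_n) :
  (\sum_(i < n) \sum_(j < n) F i j *: ('X_i * 'X_j : {mpoly R[n]}))@_(U_(a) + U_(b))%MM =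
  F b a + (if b == a then 0 else F a b).
Proof.
rewrite raddf_sum /=.
have H : forall i, (\sum_(j < n) F i j *: ('X_i * 'X_j : {mpoly R[n]}))@_(U_(a) + U_(b))%MM
   = F i a * (i == b)%:R + (if b == a then 0 else F i b * (i == a)%:R).
  move=> i; rewrite raddf_sum /=.
  rewrite -(sum_if2 (fun j => F i j * (i == b)%:R) (fun j => F i j * (i == a)%:R)).
  apply: eq_bigr => j _; rewrite mcoeffZ cMX !mcoeffXU.
  by case: eqP => _; [|case: eqP => _]; rewrite ?mulr0.
rewrite (eq_bigr _ (fun i _ => H i)) big_split /= sum_delta'; congr (_ + _).
case: eqP => _; first by rewrite big1.
by rewrite sum_delta'.
Qed.

Lemma mdeg2P (n : nat) (m : 'X_{1..n}) : mdeg m = 2%N ->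
  exists a b, m = (U_(a) + U_(b))%MM.
Proof.
move=> hm.
have [a ha] : exists a, (0 < m a)%N.
  case: (pickP (fun a => 0 < m a)%N) => [a ha|H]; first by exists a.
  suff e : m = 0%MM by move: hm; rewrite e mdeg0.
  apply/mnmP => i; rewrite mnmE; have := H i => /= /negbT.
  by rewrite lt0n negbK => /eqP.
have le : (U_(a) <= m)%MM.
  by apply/mnm_lepP => i; rewrite mnm1E; case: eqP => [<-|] //.
have := submK le; set m' := (m - U_(a))%MM => em.
have : mdeg m' = 1%N.
  by move: hm; rewrite -em mdegD mdeg1 addn1 => -[].
move/eqP/mdeg1P => [b /eqP hb].
by exists a, b; rewrite -em hb addmC.
Qed.

Lemma eq2 (R : ringType) (n : nat) (p q : {mpoly R[n]}) :
  p \is 2.-homog -> q \is 2.-homog ->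
  (forall a b, p@_(U_(a) + U_(b))%MM = q@_(U_(a) + U_(b))%MM) -> p = q.
Proof.
move=> hp hq h; apply/mpolyP => m.
case: (eqVneq (mdeg m) 2%N) => [/mdeg2P [a [b ->]] // | ne].
by rewrite (dhomog_nemf_coeff hp ne) (dhomog_nemf_coeff hq ne).
Qed.

Lemma homogX1 (R : ringType) (n : nat) (i : 'I_n) : ('X_i : {mpoly R[n]}) \is 1.-homog.
Proof. by rewrite dhomogX; apply/eqP; exact: mdeg1. Qed.

Lemma homog_lin (R : ringType) (n : nat) (c : 'I_n -> R) :
  (\sum_(j < n) c j *: ('X_j : {mpoly R[n]})) \is 1.-homog.
Proof. by apply: rpred_sum => j _; apply: rpredZ; exact: homogX1. Qed.

Lemma homog_quad (R : comRingType) (n : nat) (q : 'I_3 -> {mpoly R[n]})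
  (V : 'I_n -> 'I_3 -> R) :
  (forall k, q k \is 1.-homog) ->
  (\sum_(k < 3) q k * (\sum_(i < n) V i k *: 'X_i)) \is 2.-homog.
Proof.
move=> hq; apply: rpred_sum => k _.
exact: (dhomogM (hq k) (homog_lin _)).
Qed.

Lemma homog_XX (R : comRingType) (n : nat) (F : 'I_n -> 'I_n -> R) :
  (\sum_(i < n) \sum_(j < n) F i j *: ('X_i * 'X_j : {mpoly R[n]})) \is 2.-homog.
Proof.
apply: rpred_sum => i _; apply: rpred_sum => j _; apply: rpredZ.
exact: (dhomogM (homogX1 _ i) (homogX1 _ j)).
Qed.

Definition Vc (K : ringType) (d : nat) (v : 'I_d -> K * K) (j : 'I_d) : 'I_3 -> K :=
  fun k => match val k with 0 => (v j).1 | 1 => (v j).2 | _ => 1 end.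

Lemma tauE (K : ringType) (d : nat) (v : 'I_d -> K * K) (k : 'I_3) :
  tau v k = \sum_(i < d) Vc v i k *: 'X_i.
Proof. by []. Qed.

Lemma det_orient (K : comRingType) (d : nat) (v : 'I_d -> K * K) (a b c : 'I_d) :
  det3 (Vc v a) (Vc v b) (Vc v c) = orient (v a) (v b) (v c).
Proof. rewrite /det3 /Vc /orient /=; ring. Qed.

Lemma conv_nz (K : realFieldType) (d : nat) (v : 'I_d -> K * K) :
  convex_polygon v -> forall i j, j != i -> j != ordS i ->
  det3 (Vc v i) (Vc v (ordS i)) (Vc v j) != 0.
Proof.
move=> hc i j h1 h2; rewrite det_orient.
case: hc => h; have := h i j h1 h2; [exact: lt0r_neq0 | exact: ltr0_neq0].
Qed.

Lemma inordK' (n m : nat) : (m <= n)%N -> val (inord m : 'I_n.+1) = m.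
Proof. by move=> h; apply: inordK. Qed.

Lemma ordS_inord (n m : nat) : (m < n)%N -> ordS (inord m : 'I_n.+1) = inord m.+1.
Proof.
move=> h; apply: val_inj => /=; rewrite inordK' ?(ltnW h) // inordK' //.
by rewrite modn_small // ltnS.
Qed.

Lemma ordS_inord_n (n : nat) : ordS (inord n : 'I_n.+1) = inord 0.
Proof. by apply: val_inj => /=; rewrite inordK' // inordK' // modnn. Qed.

Lemma inord_eq (n a b : nat) : (a <= n)%N -> (b <= n)%N ->
  ((inord a : 'I_n.+1) == inord b) = (a == b).
Proof.
move=> ha hb; apply/eqP/eqP => [e|->] //.
by rewrite -(inordK' ha) e inordK'.
Qed.

Lemma ordS_cases (n : nat) (a : 'I_n.+1) :
  (exists2 m, (m < n)%N & a = inord m /\ ordS a = inord m.+1) \/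
  (a = inord n /\ ordS a = inord 0).
Proof.
case: (ltnP (val a) n) => h.
  left; exists (val a) => //; rewrite inord_val; split => //.
  by rewrite -{1}(inord_val a) ordS_inord.
right; have e : a = inord n.
  by apply: val_inj; rewrite /= inordK' //; apply/eqP; rewrite eqn_leq h -ltnS ltn_ord.
by rewrite e ordS_inord_n.
Qed.

Lemma nondiag (n : nat) (a b : 'I_n.+1) : ~~ diagonal_pair a b -> b != a ->
  b = ordS a \/ a = ordS b.
Proof.
rewrite /diagonal_pair => /and3P H nba.
case: (eqVneq b (ordS a)) => [->|h1]; first by left.
case: (eqVneq a (ordS b)) => [->|h2]; first by right.
by exfalso; apply: H; split.
Qed.

Definition bn (K : ringType) (n : nat) (v : 'I_n.+1 -> K * K) (g : 'I_n.+1 -> K)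
  (m : nat) : 'I_3 -> K :=
  fun k => \sum_(i < n.+1 | (i < m)%N) g i * Vc v i k.

Definition uu (K : ringType) (n : nat) (v : 'I_n.+1 -> K * K) (g : 'I_n.+1 -> K)
  (j : 'I_n.+1) : 'I_3 -> K := cross (Vc v j) (bn v g j).

Definition qq (K : ringType) (n : nat) (v : 'I_n.+1 -> K * K) (g : 'I_n.+1 -> K)
  (k : 'I_3) : {mpoly K[n.+1]} := \sum_(j < n.+1) uu v g j k *: 'X_j.

Definition Phi (K : ringType) (n : nat) (v : 'I_n.+1 -> K * K) (g : 'I_n.+1 -> K)
  : {mpoly K[n.+1]} := \sum_(k < 3) qq v g k * tau v k.

Lemma bn_step (K : ringType) (n : nat) (v : 'I_n.+1 -> K * K) (g : 'I_n.+1 -> K)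
  (m : nat) k : (m <= n)%N ->
  bn v g m.+1 k = bn v g m k + g (inord m) * Vc v (inord m) k.
Proof.
move=> hm; rewrite /bn.
rewrite (bigD1 (inord m)) /=; last by rewrite inordK' ?ltnSn.
rewrite addrC; congr (_ + _).
rewrite [in RHS](bigID (fun i : 'I_n.+1 => i == inord m)) /=.
rewrite [X in _ = X + _]big1 ?add0r; last first.
  by move=> i /andP[]; rewrite ltnNge => /negbTE + /eqP e; rewrite e inordK' // leqnn.
apply: eq_bigl => i; rewrite ltnS leq_eqVlt.
case: eqP => [e|ne] /=; last by [].
have -> : i = inord m by apply: val_inj; rewrite /= inordK'.
by rewrite eqxx /= andbF.
Qed.

Lemma bn0 (K : ringType) (n : nat) (v : 'I_n.+1 -> K * K) (g : 'I_n.+1 -> K) k :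
  bn v g 0 k = 0.
Proof. by rewrite /bn big1. Qed.

Lemma bn_full (K : ringType) (n : nat) (v : 'I_n.+1 -> K * K) (g : 'I_n.+1 -> K) k :
  bn v g n.+1 k = \sum_(i < n.+1) g i * Vc v i k.
Proof. by rewrite /bn; apply: eq_bigl => i; rewrite ltn_ord. Qed.

Lemma Phi_homog (K : comRingType) (n : nat) (v : 'I_n.+1 -> K * K) (g : 'I_n.+1 -> K) :
  Phi v g \is 2.-homog.
Proof. by apply: homog_quad => k; exact: homog_lin. Qed.

Lemma Phi_coef (K : comRingType) (n : nat) (v : 'I_n.+1 -> K * K) (g : 'I_n.+1 -> K)
  (a b : 'I_n.+1) :
  (Phi v g)@_(U_(a) + U_(b))%MM =
  dot (Vc v a) (uu v g b) + (if b == a then 0 else dot (Vc v b) (uu v g a)).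
Proof.
rewrite /Phi (eq_bigr _ (fun k _ => congr1 (fun t => qq v g k * t) (tauE v k))).
rewrite coef2; congr (_ + _); first by apply: dot_ext => k; rewrite coef_lin.
by case: eqP => // _; apply: dot_ext => k; rewrite coef_lin.
Qed.

Lemma Qcross (K : comRingType) (A B bA bB : 'I_3 -> K) :
  dot A (cross B bB) + dot B (cross A bA) = det3 A B (fun k => bB k - bA k).
Proof. rewrite !dot_cross /det3; ring. Qed.

Lemma det3_comb (K : comRingType) (A B C w : 'I_3 -> K) (c e f : K) :
  (forall k, w k = c * A k + e * B k + f * C k) -> det3 A B w = f * det3 A B C.
Proof. move=> h; rewrite /det3 !h; ring. Qed.

Lemma uu_self (K : comRingType) (n : nat) (v : 'I_n.+1 -> K * K) (g : 'I_n.+1 -> K) a :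
  dot (Vc v a) (uu v g a) = 0.
Proof. rewrite /uu dot_cross /det3; ring. Qed.

Lemma Phi_self (K : comRingType) (n : nat) (v : 'I_n.+1 -> K * K) (g : 'I_n.+1 -> K) a :
  (Phi v g)@_(U_(a) + U_(a))%MM = 0.
Proof. by rewrite Phi_coef eqxx addr0 uu_self. Qed.

Lemma Phi_adj (K : comRingType) (n : nat) (v : 'I_n.+1 -> K * K) (g : 'I_n.+1 -> K) :
  (forall k, \sum_(i < n.+1) g i * Vc v i k = 0) ->
  forall a, dot (Vc v a) (uu v g (ordS a)) + dot (Vc v (ordS a)) (uu v g a) = 0.
Proof.
move=> rel a; rewrite /uu Qcross.
rewrite (det3_comb (c := g a) (e := 0) (f := 0) (C := Vc v a)); first by rewrite mul0r.
move=> k; rewrite mul0r !addr0.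
have [[m hm [-> ->]]|[-> ->]] := ordS_cases a.
  rewrite (inordK' hm) (inordK' (ltnW hm)) bn_step ?(ltnW hm) //.
  ring.
rewrite !inordK // bn0.
have := rel k; rewrite -bn_full bn_step // => /eqP; rewrite addr_eq0 => /eqP ->.
rewrite opprK; ring.
Qed.

Lemma Phi_short (K : comRingType) (n : nat) (v : 'I_n.+1 -> K * K) (g : 'I_n.+1 -> K)
  (j : nat) : (j + 2 <= n)%N ->
  (Phi v g)@_(U_(inord j) + U_(inord j.+2))%MM =
  g (inord j.+1) * det3 (Vc v (inord j)) (Vc v (inord j.+2)) (Vc v (inord j.+1)).
Proof.
move=> hj.
have hj2 : (j.+2 <= n)%N by rewrite -addn2.
have ne : ((inord j.+2 : 'I_n.+1) == inord j) = false.
  rewrite inord_eq //; last by apply: leq_trans hj2; rewrite ltnW.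
  by elim: j {hj hj2}.
rewrite Phi_coef ne.
rewrite /uu Qcross.
apply: (det3_comb (c := g (inord j)) (e := 0)) => k.
have h2 : (j.+2 < n.+1)%N by rewrite ltnS.
have h0 : (j < n.+1)%N by rewrite ltnS; apply: leq_trans hj2; rewrite ltnW.
have h1 : (j.+1 <= n)%N by exact: ltnW hj2.
have h1' : (j <= n)%N by exact: ltnW h1.
rewrite (inordK h2) (inordK h0) (bn_step _ _ _ h1) (bn_step _ _ _ h1').
ring.
Qed.

Lemma cramer4 (R : comRingType) (A B C E : 'I_3 -> R) k :
  det3 B C E * A k - det3 A C E * B k + det3 A B E * C k - det3 A B C * E k = 0.
Proof.
case: k => [[|[|[|//]]] hk].
- have -> : Ordinal hk = i0 by exact: val_inj.
  rewrite /det3; ring.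
- have -> : Ordinal hk = i1 by exact: val_inj.
  rewrite /det3; ring.
- have -> : Ordinal hk = i2 by exact: val_inj.
  rewrite /det3; ring.
Qed.

Definition gam (K : fieldType) (n : nat) (v : 'I_n.+1 -> K * K) (t : nat)
  (i : 'I_n.+1) : K :=
  let A := Vc v (inord t.+1) in let B := Vc v (inord n.-1) in
  let C := Vc v (inord n) in let E := Vc v (inord 0) in
  (i == inord t.+1)%:R - (i == inord n.-1)%:R * (det3 A C E / det3 B C E)
  + (i == inord n)%:R * (det3 A B E / det3 B C E)
  - (i == inord 0)%:R * (det3 A B C / det3 B C E).

Lemma sum_deltaL (R : comRingType) (n : nat) (G : 'I_n -> R) (c : R) (b : 'I_n) :
  \sum_(i < n) (i == b)%:R * c * G i = c * G b.
Proof.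
rewrite -[RHS](sum_delta (fun i => c * G i) b); apply: eq_bigr => i _.
by case: eqP => _; rewrite ?mul1r ?mul0r.
Qed.

Lemma gam_rel (K : fieldType) (n : nat) (v : 'I_n.+1 -> K * K) (t : nat) :
  det3 (Vc v (inord n.-1)) (Vc v (inord n)) (Vc v (inord 0)) != 0 ->
  forall k, \sum_(i < n.+1) gam v t i * Vc v i k = 0.
Proof.
move=> nz k; rewrite /gam.
set A := Vc v (inord t.+1); set B := Vc v (inord n.-1).
set C := Vc v (inord n); set E := Vc v (inord 0).
set D := det3 B C E.
rewrite (eq_bigr (fun i => ((i == inord t.+1)%:R * 1 * Vc v i k
   - (i == inord n.-1)%:R * (det3 A C E / D) * Vc v i k)
   + (i == inord n)%:R * (det3 A B E / D) * Vc v i k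
   - (i == inord 0)%:R * (det3 A B C / D) * Vc v i k)); last first.
  move=> i _; ring.
rewrite sumrB big_split /= sumrB !sum_deltaL.
have := cramer4 A B C E k; rewrite -/A -/B -/C -/E.
move=> h; apply: (mulfI nz); rewrite mulr0 -[RHS]h -/D.
rewrite -/A -/B -/C -/E; field; exact: nz.
Qed.

Lemma gam_val (K : fieldType) (n : nat) (v : 'I_n.+1 -> K * K) (t j : nat) :
  (t + 3 <= n)%N -> (0 < j)%N -> (j + 2 <= n)%N ->
  gam v t (inord j) = (j == t.+1)%:R.
Proof.
move=> ht hj0 hj.
rewrite /gam !inord_eq; try lia.
have -> : (j == n.-1) = false by apply/eqP; lia.
have -> : (j == n) = false by apply/eqP; lia.
have -> : (j == 0%N) = false by apply/eqP; lia.
by rewrite !mul0r subr0 addr0 subr0.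
Qed.

Lemma diag_sym (n : nat) (a b : 'I_n) : diagonal_pair a b = diagonal_pair b a.
Proof.
rewrite /diagonal_pair eq_sym; congr (_ && _); rewrite andbC //.
Qed.

Lemma D_form (K : comRingType) (n : nat) (c : 'I_n -> 'I_n -> K) :
  \sum_(i < n) \sum_(j < n | diagonal_pair i j) c i j *: ('X_i * 'X_j : {mpoly K[n]}) =
  \sum_(i < n) \sum_(j < n) (if diagonal_pair i j then c i j else 0) *: ('X_i * 'X_j).
Proof.
apply: eq_bigr => i _; rewrite big_mkcond; apply: eq_bigr => j _.
by case: ifP => _; rewrite ?scale0r.
Qed.

Lemma D_coef0 (K : comRingType) (n : nat) (p : {mpoly K[n]}) (a b : 'I_n) :
  in_D p -> ~~ diagonal_pair a b -> p@_(U_(a) + U_(b))%MM = 0.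
Proof.
move=> [c ->] nd; rewrite D_form coefXX diag_sym (negbTE nd).
by case: eqP => _; rewrite ?addr0 // (diag_sym a b) (negbTE nd) addr0.
Qed.

Lemma Phi_D (K : comRingType) (n : nat) (v : 'I_n.+1 -> K * K) (g : 'I_n.+1 -> K) :
  (forall k, \sum_(i < n.+1) g i * Vc v i k = 0) -> in_D (Phi v g).
Proof.
move=> rel; exists (fun i j => dot (Vc v j) (uu v g i)).
rewrite D_form; apply: eq2; [exact: Phi_homog | exact: homog_XX |] => a b.
rewrite Phi_coef coefXX.
case: (eqVneq b a) => [->|nba].
  by rewrite uu_self /diagonal_pair eqxx /= addr0.
rewrite (diag_sym b a).
case: (boolP (diagonal_pair a b)) => // nd.
rewrite addr0.
case: (nondiag nd nba) => [->|->]; first exact: Phi_adj.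
by rewrite addrC; apply: Phi_adj.
Qed.

Lemma Phi_IC (K : comRingType) (n : nat) (v : 'I_n.+1 -> K * K) (g : 'I_n.+1 -> K) :
  in_IC2 v (Phi v g).
Proof. by split; [exact: Phi_homog | exists (qq v g)]. Qed.

Theorem lemma3p3 (K : realFieldType) (d : nat) (v : 'I_d -> K * K) :
  (4 <= d)%N ->
  convex_polygon v ->
  no_three_edge_lines_concurrent v ->
  has_dim (fun p : {mpoly K[d]} => in_D p /\ in_IC2 v p) (d - 3).
Proof.
case: d v => [|n] v hd hc _; first by [].
have n3 : (3 <= n)%N by [].
set N := (n.+1 - 3)%N.
have hN : forall t : 'I_N, (t + 3 <= n)%N.
  by move=> t; have := ltn_ord t; rewrite /N; lia.
have Hdet : forall m, (m + 2 <= n)%N ->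
    det3 (Vc v (inord m)) (Vc v (inord m.+1)) (Vc v (inord m.+2)) != 0.
  move=> m hm; rewrite -ordS_inord; last by lia.
  apply: conv_nz => //; rewrite ?ordS_inord; try lia.
  - by rewrite inord_eq; try lia.
  - by rewrite inord_eq; try lia.
have Hw : det3 (Vc v (inord n.-1)) (Vc v (inord n)) (Vc v (inord 0)) != 0.
  have e : (inord n : 'I_n.+1) = ordS (inord n.-1) by rewrite ordS_inord ?prednK //; lia.
  rewrite e; apply: conv_nz => //; rewrite -?e inord_eq; lia.
pose Dt (j : nat) := det3 (Vc v (inord j)) (Vc v (inord j.+2)) (Vc v (inord j.+1)).
have HDt : forall j, (j + 2 <= n)%N -> Dt j != 0.
  move=> j hj; have := Hdet j hj; apply: contra => /eqP h.
  by apply/eqP; rewrite -[RHS]oppr0 -h /Dt /det3; ring.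
pose bas (t : 'I_N) := Phi v (gam v (nat_of_ord t)).
have bas_short : forall (t : 'I_N) (j : nat), (j + 3 <= n)%N ->
    (bas t)@_(U_(inord j) + U_(inord j.+2))%MM = (j == nat_of_ord t)%:R * Dt j.
  move=> t j hj; rewrite /bas Phi_short; last by lia.
  by rewrite gam_val ?hN //; lia.
have rel : forall t : nat, forall k, \sum_(i < n.+1) gam v t i * Vc v i k = 0.
  by move=> t; apply: gam_rel.
exists bas; split.
- by move=> t; split; [apply: Phi_D | apply: Phi_IC].
- move=> c H t.
  have := congr1 (mcoeff (U_(inord (nat_of_ord t)) + U_(inord (nat_of_ord t).+2))%MM) H.
  rewrite raddf_sum mcoeff0 /=.
  under eq_bigr do rewrite mcoeffZ bas_short ?hN //.
  have -> : \sum_(i < N) c i * ((nat_of_ord t == nat_of_ord i)%:R * Dt (nat_of_ord t)) =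
            \sum_(i < N) (if i == t then c i * Dt (nat_of_ord t) else 0).
    apply: eq_bigr => i _; rewrite eq_sym; case: eqP => [e|ne].
      by rewrite (val_inj e) eqxx mul1r.
    by case: eqP => [e|_]; [rewrite e in ne | rewrite mul0r mulr0].
  rewrite sum_delta => /eqP; rewrite mulf_eq0 => /orP[/eqP //|].
  by rewrite (negbTE (HDt _ _)) //; have := hN t; lia.
- move=> p [HD [hom [q hq]]].
  pose c (t : 'I_N) := p@_(U_(inord (nat_of_ord t)) + U_(inord (nat_of_ord t).+2))%MM / Dt (nat_of_ord t).
  exists c.
  set r := p - \sum_(t < N) c t *: bas t.
  suff : r = 0 by move/eqP; rewrite subr_eq0 => /eqP.
  pose qr (k : 'I_3) := q k - \sum_(t < N) c t *: qq v (gam v (nat_of_ord t)) k.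
  have hr : r = \sum_(k < 3) qr k * (\sum_(i < n.+1) Vc v i k *: 'X_i).
    rewrite /r hq /bas /Phi.
    under [RHS]eq_bigr do rewrite mulrBl mulr_suml -tauE.
    rewrite sumrB exchange_big /=; congr (_ - _).
    apply: eq_bigr => t _; rewrite scaler_sumr; apply: eq_bigr => k _.
    by rewrite scalerAl.
  pose u (j : 'I_n.+1) (k : 'I_3) := (qr k)@_U_(j).
  have rcoef : forall a b, r@_(U_(a) + U_(b))%MM =
      dot (Vc v a) (u b) + (if b == a then 0 else dot (Vc v b) (u a)).
    by move=> a b; rewrite hr coef2.
  have rlin : forall a b, r@_(U_(a) + U_(b))%MM =
      p@_(U_(a) + U_(b))%MM - \sum_(t < N) c t * (bas t)@_(U_(a) + U_(b))%MM.
    move=> a b; rewrite /r mcoeffB raddf_sum /=.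
    by congr (_ - _); apply: eq_bigr => t _; rewrite mcoeffZ.
  have Hs : forall a, dot (Vc v a) (u a) = 0.
    move=> a; have := rcoef a a; rewrite eqxx addr0 => <-.
    rewrite rlin D_coef0 //; last by rewrite /diagonal_pair eqxx.
    rewrite big1 ?subr0 // => t _.
    by rewrite /bas Phi_self mulr0.
  have Hadj0 : forall a, Qp (Vc v) u a (ordS a).
    move=> a; rewrite /Qp.
    have nba : ordS a != a.
      have [[m hm [-> ->]]|[-> ->]] := ordS_cases a; rewrite inord_eq; lia.
    have := rcoef a (ordS a); rewrite (negbTE nba) => <-.
    rewrite rlin D_coef0 //; last by rewrite /diagonal_pair eqxx andbF.
    rewrite big1 ?subr0 // => t _.
    by rewrite /bas Phi_coef (negbTE nba) Phi_adj ?mulr0.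
  have Hsd : forall m, (m + 3 <= n)%N -> Qp (Vc v) u (inord m) (inord m.+2).
    move=> m hm; rewrite /Qp.
    have nba : (inord m.+2 : 'I_n.+1) != inord m by rewrite inord_eq; lia.
    have := rcoef (inord m) (inord m.+2); rewrite (negbTE nba) => <-.
    rewrite rlin.
    have hmN : (m < N)%N by rewrite /N; lia.
    rewrite (bigD1 (Ordinal hmN)) //= big1 ?addr0; last first.
      move=> t ht; rewrite bas_short // .
      case: eqP => [e|_]; last by rewrite mul0r mulr0.
      by exfalso; move/eqP: ht; apply; apply: val_inj.
    rewrite bas_short // eqxx mul1r /c /= mulfVK ?subrr //.
    by apply: HDt; lia.
  have Q := crux n3 Hdet Hw Hs
    (fun m hm => eq_rect _ (fun x => Qp (Vc v) u (inord m) x) (Hadj0 (inord m)) _ (ordS_inord hm))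
    (eq_rect _ (fun x => Qp (Vc v) u (inord n) x) (Hadj0 (inord n)) _ (ordS_inord_n n))
    Hsd.
  apply: eq2; [|exact: rpred0|].
    rewrite /r; apply: rpredB => //; apply: rpred_sum => t _; apply: rpredZ.
    exact: Phi_homog.
  move=> a b; rewrite mcoeff0 rcoef.
  case: eqP => [->|_]; first by rewrite Hs addr0.
  exact: Q.
Qed.
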